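(* Let $F(x,y)=(f(x,y),x,y)$ be a germ at $o=(0,0)$ of a $C^3$ map into $\mathbf{R}^3_1$ with $f(0,0)=0$, $f_x(0,0)=0$, $f_y(0,0)=1$, such that the set $\{B_F\neq 0\}$ is open and dense in the domain and $A_F-\varphi B_F^2\equiv0$ for some $C^1$ function germ $\varphi$ at $o$. Then the light-like point $o$ is not an isolated point of the set of light-like points $\{B_F=0\}$.
   Context: $\mathbf{R}^3_1$ is Lorentz–Minkowski 3-space with coordinates $(t,x,y)$ and inner product $-dt^2+dx^2+dy^2$. $B_F:=1-f_x^2-f_y^2$, $A_F:=(1-f_x^2)f_{yy}+2f_xf_yf_{xy}+(1-f_y^2)f_{xx}$. A point $p$ is light-like if $B_F(p)=0$. *)

(* Defs.v *)
From Stdlib Require Import Reals.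
From Coquelicot Require Import Coquelicot.
Open Scope R_scope.

Definition dx (f : R -> R -> R) : R -> R -> R :=
  fun x y => Derive (fun t => f t y) x.
Definition dy (f : R -> R -> R) : R -> R -> R :=
  fun x y => Derive (fun t => f x t) y.

Definition open2 (U : R -> R -> Prop) : Prop :=
  forall x y, U x y -> exists eps, 0 < eps /\
    forall x' y', Rabs (x' - x) < eps -> Rabs (y' - y) < eps -> U x' y'.

Definition Ck_on (k : nat) (f : R -> R -> R) (U : R -> R -> Prop) : Prop :=
  forall x y, U x y -> ex_diff_n f k x y.

Definition BF (f : R -> R -> R) : R -> R -> R :=
  fun x y => 1 - (dx f x y)^2 - (dy f x y)^2.

Definition AF (f : R -> R -> R) : R -> R -> R :=
  fun x y =>
    (1 - (dx f x y)^2) * dy (dy f) x y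
    + 2 * dx f x y * dy f x y * dy (dx f) x y
    + (1 - (dy f x y)^2) * dx (dx f) x y.

Definition open_in2 (U S : R -> R -> Prop) : Prop :=
  forall x y, U x y -> S x y -> exists eps, 0 < eps /\
    forall x' y', U x' y' -> Rabs (x' - x) < eps -> Rabs (y' - y) < eps -> S x' y'.

Definition dense_in2 (U S : R -> R -> Prop) : Prop :=
  forall x y, U x y -> forall eps, 0 < eps -> exists x' y',
    U x' y' /\ S x' y' /\ Rabs (x' - x) < eps /\ Rabs (y' - y) < eps.

(* Main.v *)
Require Import Defs.
From Stdlib Require Import Reals Lra Lia Psatz.
From Coquelicot Require Import Coquelicot.
Open Scope R_scope.

Lemma cont_of_eps (h : R -> R) x :
  (forall eps, 0 < eps -> exists d, 0 < d /\ forall y, Rabs (y - x) < d -> Rabs (h y - h x) < eps) ->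
  continuous h x.
Proof.
  intros Hc. apply continuity_pt_filterlim.
  intros eps Heps. destruct (Hc eps Heps) as [d [Hd Hy]].
  exists d. split; [exact Hd|]. intros y [_ Hy']. apply Hy. exact Hy'.
Qed.

Lemma locally_of_eps (P : R -> Prop) x d : 0 < d ->
  (forall y, Rabs (y - x) < d -> P y) -> locally x P.
Proof.
  intros Hd HP. exists (mkposreal d Hd). intros y Hy. apply HP. exact Hy.
Qed.

Lemma norm_R (x : R) : norm x = Rabs x.
Proof. reflexivity. Qed.

Section Picard.
Variable H : R -> R -> R.
Variables M L s : R.
Hypothesis HM : 0 <= M.
Hypothesis HL : 0 <= L.
Hypothesis Hs : 0 < s.
Hypothesis HLs : L * s <= / 2.
Hypothesis Hbd : forall x t, Rabs (H x t) <= M.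
Hypothesis Hlip : forall x1 x2 t, Rabs (H x1 t - H x2 t) <= L * Rabs (x1 - x2).
Hypothesis Hcont : forall x t, continuity_2d_pt H x t.

Lemma cont_comp_lip (g : R -> R) (K : R) t (d0 : R) : 0 < d0 -> 0 <= K ->
  (forall t1 t2, Rabs (t1 - t) < d0 -> Rabs (t2 - t) < d0 -> Rabs (g t1 - g t2) <= K * Rabs (t1 - t2)) ->
  continuous (fun tau => H (g tau) tau) t.
Proof.
  intros Hd0 HK Hg. apply cont_of_eps. intros eps Heps.
  destruct (Hcont (g t) t (mkposreal eps Heps)) as [d Hd]. simpl in Hd.
  exists (Rmin d0 (Rmin d (d / (K + 1)))).
  assert (0 < d / (K+1)) by (apply Rdiv_lt_0_compat; [apply cond_pos|lra]).
  split. { apply Rmin_pos; [lra|apply Rmin_pos; [apply cond_pos|lra]]. }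
  intros y Hy. apply Hd.
  - assert (Hy1 : Rabs (y - t) < d0) by (eapply Rlt_le_trans; [exact Hy| apply Rmin_l]).
    assert (Hy2 : Rabs (y - t) < d / (K+1)).
    { eapply Rlt_le_trans; [exact Hy|]. eapply Rle_trans; [apply Rmin_r|apply Rmin_r]. }
    eapply Rle_lt_trans. apply Hg; [exact Hy1| rewrite Rminus_eq_0, Rabs_R0; lra].
    apply Rle_lt_trans with (K * (d / (K+1))).
    apply Rmult_le_compat_l; lra.
    assert (0 < d) by apply cond_pos.
    apply Rlt_le_trans with ((K+1) * (d/(K+1))). apply Rmult_lt_compat_r; lra.
    right. field. lra.
  - eapply Rlt_le_trans; [exact Hy|]. eapply Rle_trans; [apply Rmin_r|apply Rmin_l].
Qed.

Fixpoint Xs (n : nat) : R -> R :=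
  match n with
  | O => fun _ => 0
  | S m => fun t => RInt (fun tau => H (Xs m tau) tau) 0 t
  end.


Lemma ex_RInt_of_lip (g : R -> R) (K : R) a b : 0 <= K ->
  (forall t1 t2, Rabs (g t1 - g t2) <= K * Rabs (t1 - t2)) ->
  ex_RInt (fun tau => H (g tau) tau) a b.
Proof.
  intros HK Hg. apply (@ex_RInt_continuous R_CompleteNormedModule). intros z _.
  apply (cont_comp_lip g K z 1); [lra|exact HK|]. intros; apply Hg.
Qed.

Lemma RInt_diff (f : R -> R) a b : (forall c d, ex_RInt f c d) ->
  RInt f 0 a - RInt f 0 b = RInt f b a.
Proof.
  intros He. rewrite <- (RInt_Chasles f b 0 a) by apply He.
  rewrite <- (opp_RInt_swap f 0 b) by apply He.
  unfold plus, opp; simpl. ring.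
Qed.

Lemma Xs_lip n : forall t1 t2, Rabs (Xs n t1 - Xs n t2) <= M * Rabs (t1 - t2).
Proof.
  induction n as [|n IH]; intros t1 t2; simpl.
  - rewrite Rminus_eq_0, Rabs_R0. apply Rmult_le_pos; [lra|apply Rabs_pos].
  - rewrite RInt_diff by (intros; apply (ex_RInt_of_lip _ M); auto).
    rewrite <- norm_R, Rmult_comm.
    apply (norm_RInt_le_const_abs (fun tau => H (Xs n tau) tau) t2 t1).
    + intros; rewrite norm_R; apply Hbd.
    + apply (@RInt_correct R_CompleteNormedModule). apply (ex_RInt_of_lip _ M); auto.
Qed.

Lemma Xs_ex n a b : ex_RInt (fun tau => H (Xs n tau) tau) a b.
Proof. apply (ex_RInt_of_lip _ M); auto. apply Xs_lip. Qed.

Lemma Xs_0 n : Xs n 0 = 0.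
Proof. destruct n; simpl; [reflexivity|]. apply (@RInt_point R_CompleteNormedModule). Qed.

Lemma Rabs_le_inv (a b : R) : Rabs a <= b -> - b <= a <= b.
Proof. unfold Rabs; destruct (Rcase_abs a); lra. Qed.

Lemma in_seg (x t r : R) : Rmin 0 t <= x <= Rmax 0 t -> Rabs t <= r -> Rabs x <= r.
Proof.
  intros [H1 H2] Ht. apply Rabs_le. apply Rabs_le_inv in Ht.
  unfold Rmin, Rmax in *. destruct (Rle_dec 0 t); lra.
Qed.

Lemma Xs_step n : forall t, Rabs t <= s -> Rabs (Xs (S n) t - Xs n t) <= M * s * (/2)^n.
Proof.
  induction n as [|n IH]; intros t Ht.
  - simpl pow. replace (Xs 1 t - Xs 0 t) with (Xs 1 t - Xs 1 0) by (rewrite Xs_0; reflexivity).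
    eapply Rle_trans. apply Xs_lip. rewrite Rminus_0_r.
    rewrite Rmult_1_r. apply Rmult_le_compat_l; lra.
  - change (Xs (S (S n)) t) with (RInt (fun tau => H (Xs (S n) tau) tau) 0 t).
    change (Xs (S n) t) with (RInt (fun tau => H (Xs n tau) tau) 0 t).
    assert (E : RInt (fun tau => H (Xs (S n) tau) tau) 0 t - RInt (fun tau => H (Xs n tau) tau) 0 t
      = RInt (fun tau => H (Xs (S n) tau) tau - H (Xs n tau) tau) 0 t).
    { symmetry. apply (@RInt_minus R_CompleteNormedModule); apply Xs_ex. }
    rewrite E, <- norm_R.
    apply Rle_trans with (Rabs (t - 0) * (L * (M * s * (/2)^n))).
    + apply (norm_RInt_le_const_abs (fun tau => H (Xs (S n) tau) tau - H (Xs n tau) tau) 0 t).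
      * intros x Hx. rewrite norm_R. eapply Rle_trans. apply Hlip.
        apply Rmult_le_compat_l; [lra|]. apply IH. eapply in_seg; eauto.
      * apply (@RInt_correct R_CompleteNormedModule).
        apply (@ex_RInt_minus R_CompleteNormedModule); apply Xs_ex.
    + rewrite Rminus_0_r. simpl pow.
      assert (0 <= M * s * (/2)^n).
      { apply Rmult_le_pos; [apply Rmult_le_pos; lra|]. apply pow_le; lra. }
      assert (Rabs t * L <= / 2).
      { eapply Rle_trans; [|exact HLs]. rewrite (Rmult_comm L). apply Rmult_le_compat_r; lra. }
      replace (Rabs t * (L * (M * s * (/2)^n))) with ((Rabs t * L) * (M * s * (/2)^n)) by ring.
      replace (M * s * (/ 2 * (/ 2) ^ n)) with (/2 * (M * s * (/2)^n)) by ring.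
      apply Rmult_le_compat_r; lra.
Qed.
Lemma Xs_cauchy k : forall n t, Rabs t <= s ->
  Rabs (Xs (n + k) t - Xs n t) <= 2 * M * s * ((/2)^n - (/2)^(n+k)).
Proof.
  induction k as [|k IH]; intros n t Ht.
  - rewrite Nat.add_0_r, Rminus_eq_0, Rabs_R0. right; ring.
  - rewrite Nat.add_succ_r.
    replace (Xs (S (n + k)) t - Xs n t) with ((Xs (S (n+k)) t - Xs (n+k) t) + (Xs (n+k) t - Xs n t)) by ring.
    eapply Rle_trans. apply Rabs_triang.
    eapply Rle_trans. apply Rplus_le_compat. apply Xs_step; exact Ht. apply IH; exact Ht.
    right. change ((/2)^(S (n+k))) with (/2 * (/2)^(n+k)). field.
Qed.

Lemma Xs_cauchy' n m t : (n <= m)%nat -> Rabs t <= s ->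
  Rabs (Xs m t - Xs n t) <= 2 * M * s * (/2)^n.
Proof.
  intros Hnm Ht. replace m with (n + (m - n))%nat by lia.
  eapply Rle_trans. apply Xs_cauchy; exact Ht.
  assert (0 <= (/2)^(n + (m-n))) by (apply pow_le; lra).
  assert (0 <= 2 * M * s) by (apply Rmult_le_pos; lra).
  apply Rmult_le_compat_l; lra.
Qed.

Lemma half_pow_small eps : 0 < eps -> exists N, forall n, (n >= N)%nat -> (/2)^n < eps.
Proof.
  intros He. destruct (pow_lt_1_zero (/2)) with (y := eps) as [N HN].
  rewrite Rabs_pos_eq; lra. exact He.
  exists N. intros n Hn. specialize (HN n Hn). rewrite Rabs_pos_eq in HN; [exact HN|].
  apply pow_le; lra.
Qed.

Lemma le_of_half_pow a C : (forall n, a <= C * (/2)^n) -> a <= 0.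
Proof.
  intros Ha. apply Rle_plus_epsilon. intros eps He.
  destruct (half_pow_small (eps / (Rabs C + 1))) as [N HN].
  apply Rdiv_lt_0_compat; [exact He| pose proof (Rabs_pos C); lra].
  specialize (HN N (le_n N)). specialize (Ha N).
  assert (0 <= (/2)^N) by (apply pow_le; lra).
  assert (C * (/2)^N <= Rabs C * (/2)^N) by (apply Rmult_le_compat_r; [lra|apply RRle_abs]).
  assert (Rabs C * (/2)^N <= eps).
  { apply Rle_trans with ((Rabs C + 1) * (eps / (Rabs C + 1))).
    apply Rle_trans with ((Rabs C + 1) * (/2)^N).
    pose proof (Rabs_pos C). nra.
    pose proof (Rabs_pos C). apply Rmult_le_compat_l; lra.
    right; field. pose proof (Rabs_pos C); lra. }
  lra.
Qed.

Definition Xlim (t : R) : R := real (Lim_seq (fun n => Xs n t)).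

Lemma Xlim_cv t : Rabs t <= s -> Un_cv (fun n => Xs n t) (Xlim t).
Proof.
  intros Ht.
  assert (Hc : Cauchy_crit (fun n => Xs n t)).
  { intros eps He.
    destruct (half_pow_small (eps / (2 * M * s + 1))) as [N HN].
    apply Rdiv_lt_0_compat; [exact He|]. assert (0 <= M * s) by (apply Rmult_le_pos; lra). lra.
    exists N. intros n m Hn Hm. unfold Rdist.
    assert (0 <= 2 * M * s) by (apply Rmult_le_pos; lra).
    assert (Hb : forall p q, (p >= N)%nat -> (p <= q)%nat -> Rabs (Xs q t - Xs p t) < eps).
    { intros p q Hp Hpq. eapply Rle_lt_trans. apply Xs_cauchy'; assumption.
      specialize (HN p Hp).
      apply Rle_lt_trans with (2 * M * s * (eps / (2 * M * s + 1))).
      apply Rmult_le_compat_l; lra.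
      apply Rlt_le_trans with ((2 * M * s + 1) * (eps / (2 * M * s + 1))).
      apply Rmult_lt_compat_r. apply Rdiv_lt_0_compat; lra. lra.
      right; field; lra. }
    destruct (Nat.le_ge_cases n m) as [Hnm|Hnm].
    - rewrite Rabs_minus_sym. apply Hb; lia.
    - apply Hb; lia. }
  destruct (Rcomplete.R_complete _ Hc) as [l Hl].
  unfold Xlim. rewrite (is_lim_seq_unique _ l). exact Hl.
  apply is_lim_seq_Reals. exact Hl.
Qed.

Lemma Xlim_err n t : Rabs t <= s -> Rabs (Xlim t - Xs n t) <= 2 * M * s * (/2)^n.
Proof.
  intros Ht. apply Rle_plus_epsilon. intros eps He.
  destruct (Xlim_cv t Ht eps He) as [N HN].
  specialize (HN (max N n) (Nat.le_max_l N n)). unfold Rdist in HN.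
  replace (Xlim t - Xs n t) with (-(Xs (max N n) t - Xlim t) + (Xs (max N n) t - Xs n t)) by ring.
  eapply Rle_trans. apply Rabs_triang. rewrite Rabs_Ropp.
  pose proof (Xs_cauchy' n (max N n) t (Nat.le_max_r N n) Ht). lra.
Qed.

Lemma Xlim_0 : Xlim 0 = 0.
Proof.
  assert (H0 : Rabs 0 <= s) by (rewrite Rabs_R0; lra).
  assert (Rabs (Xlim 0) <= 0).
  { apply (le_of_half_pow _ (2 * M * s)). intros n. pose proof (Xlim_err n 0 H0) as E. rewrite Xs_0, Rminus_0_r in E.
    lra. }
  pose proof (Rabs_pos (Xlim 0)). apply Rabs_eq_0. lra.
Qed.

Lemma Xlim_lip t1 t2 : Rabs t1 <= s -> Rabs t2 <= s ->
  Rabs (Xlim t1 - Xlim t2) <= M * Rabs (t1 - t2).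
Proof.
  intros H1 H2.
  assert (Rabs (Xlim t1 - Xlim t2) - M * Rabs (t1 - t2) <= 0); [|lra].
  apply (le_of_half_pow _ (4 * M * s)). intros n.
  replace (Xlim t1 - Xlim t2) with ((Xlim t1 - Xs n t1) + (Xs n t1 - Xs n t2) - (Xlim t2 - Xs n t2)) by ring.
  pose proof (Xlim_err n t1 H1). pose proof (Xlim_err n t2 H2). pose proof (Xs_lip n t1 t2).
  pose proof (Rabs_triang (Xlim t1 - Xs n t1 + (Xs n t1 - Xs n t2)) (- (Xlim t2 - Xs n t2))).
  pose proof (Rabs_triang (Xlim t1 - Xs n t1) (Xs n t1 - Xs n t2)).
  rewrite Rabs_Ropp in *. replace (Xlim t1 - Xs n t1 + (Xs n t1 - Xs n t2) - (Xlim t2 - Xs n t2)) with (Xlim t1 - Xs n t1 + (Xs n t1 - Xs n t2) + - (Xlim t2 - Xs n t2)) by ring. lra.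
Qed.
Lemma Xlim_cont t : Rabs t < s -> continuous (fun tau => H (Xlim tau) tau) t.
Proof.
  intros Ht. apply (cont_comp_lip Xlim M t (s - Rabs t)); [lra|exact HM|].
  intros t1 t2 H1 H2. apply Xlim_lip.
  - pose proof (Rabs_triang (t1 - t) t). replace (t1 - t + t) with t1 in * by ring. lra.
  - pose proof (Rabs_triang (t2 - t) t). replace (t2 - t + t) with t2 in * by ring. lra.
Qed.

Lemma Xlim_ex t : Rabs t < s -> ex_RInt (fun tau => H (Xlim tau) tau) 0 t.
Proof.
  intros Ht. apply (@ex_RInt_continuous R_CompleteNormedModule). intros z Hz.
  apply Xlim_cont. assert (Rabs z <= Rabs t) by (eapply in_seg; [exact Hz| lra]). lra.
Qed.

Lemma Xlim_int t : Rabs t < s -> Xlim t = RInt (fun tau => H (Xlim tau) tau) 0 t.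
Proof.
  intros Ht.
  assert (Rabs (Xlim t - RInt (fun tau => H (Xlim tau) tau) 0 t) <= 0).
  2:{ pose proof (Rabs_pos (Xlim t - RInt (fun tau => H (Xlim tau) tau) 0 t)).
      assert (Rabs (Xlim t - RInt (fun tau => H (Xlim tau) tau) 0 t) = 0) by lra.
      apply Rabs_eq_0 in H2. lra. }
  apply (le_of_half_pow _ (3 * M * s)). intros n.
  assert (Hts : Rabs t <= s) by lra.
  assert (E : RInt (fun tau => H (Xs n tau) tau) 0 t - RInt (fun tau => H (Xlim tau) tau) 0 t
      = RInt (fun tau => H (Xs n tau) tau - H (Xlim tau) tau) 0 t).
  { symmetry. apply (@RInt_minus R_CompleteNormedModule). apply Xs_ex. apply Xlim_ex; exact Ht. }
  assert (B2 : Rabs (RInt (fun tau => H (Xs n tau) tau - H (Xlim tau) tau) 0 t)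
     <= Rabs (t - 0) * (L * (2 * M * s * (/2)^n))).
  { rewrite <- norm_R.
    apply (norm_RInt_le_const_abs (fun tau => H (Xs n tau) tau - H (Xlim tau) tau) 0 t).
    * intros x Hx. rewrite norm_R. eapply Rle_trans. apply Hlip.
      apply Rmult_le_compat_l; [lra|]. rewrite Rabs_minus_sym. apply Xlim_err. eapply in_seg; eauto.
    * apply (@RInt_correct R_CompleteNormedModule).
      apply (@ex_RInt_minus R_CompleteNormedModule). apply Xs_ex. apply Xlim_ex; exact Ht. }
  assert (B1 : Rabs (Xlim t - Xs (S n) t) <= 2 * M * s * (/2)^(S n)) by (apply Xlim_err; exact Hts).
  change (Xs (S n) t) with (RInt (fun tau => H (Xs n tau) tau) 0 t) in B1.
  replace (Xlim t - RInt (fun tau => H (Xlim tau) tau) 0 t) with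
    ((Xlim t - RInt (fun tau => H (Xs n tau) tau) 0 t) + (RInt (fun tau => H (Xs n tau) tau) 0 t - RInt (fun tau => H (Xlim tau) tau) 0 t)) by ring.
  rewrite E. eapply Rle_trans. apply Rabs_triang.
  rewrite Rminus_0_r in B2.
  assert (0 <= M * s * (/2)^n) by (apply Rmult_le_pos; [apply Rmult_le_pos; lra| apply pow_le; lra]).
  assert (Rabs t * L <= / 2).
  { eapply Rle_trans; [|exact HLs]. rewrite (Rmult_comm L). apply Rmult_le_compat_r; lra. }
  assert (Rabs t * (L * (2 * M * s * (/2)^n)) <= M * s * (/2)^n).
  { replace (Rabs t * (L * (2 * M * s * (/2)^n))) with ((Rabs t * L) * (2 * (M * s * (/2)^n))) by ring.
    apply Rle_trans with (/2 * (2 * (M * s * (/2)^n))). apply Rmult_le_compat_r; lra. right; field. }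
  change ((/2)^(S n)) with (/2 * (/2)^n) in B1.
  assert (2 * M * s * (/ 2 * (/ 2) ^ n) = M * s * (/2)^n) by field.
  lra.
Qed.

Lemma Xlim_deriv t : Rabs t < s -> is_derive Xlim t (H (Xlim t) t).
Proof.
  intros Ht. apply (is_derive_RInt (fun tau => H (Xlim tau) tau) Xlim 0 t).
  - apply (locally_of_eps _ t (s - Rabs t)); [lra|]. intros b Hb.
    assert (Hbs : Rabs b < s).
    { pose proof (Rabs_triang (b - t) t). replace (b - t + t) with b in * by ring. lra. }
    rewrite (Xlim_int b Hbs). apply (@RInt_correct R_CompleteNormedModule). apply Xlim_ex; exact Hbs.
  - apply Xlim_cont; exact Ht.
Qed.
End Picard.


Lemma diff_partials (g : R -> R -> R) x y :
  locally_2d (fun u v => ex_derive (fun z => g z v) u) x y ->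
  continuity_2d_pt (fun u v => Derive (fun z => g z v) u) x y ->
  ex_derive (fun z => g x z) y ->
  differentiable_pt_lim g x y (Derive (fun z => g z y) x) (Derive (fun z => g x z) y).
Proof.
  intros [d1 Hd1] Hc Hy eps.
  assert (He2 : 0 < eps / 2) by (pose proof (cond_pos eps); lra).
  destruct (Hc (mkposreal _ He2)) as [d2 Hd2]. simpl in Hd2.
  pose proof (Derive_correct _ _ Hy) as Hy'. apply is_derive_Reals in Hy'.
  destruct (Hy' (eps/2) He2) as [d3 Hd3].
  set (gx := Derive (fun z => g z y) x) in *.
  set (gy := Derive (fun z => g x z) y) in *.
  assert (Hdpos : 0 < Rmin d1 (Rmin d2 d3)).
  { apply Rmin_pos; [apply cond_pos|apply Rmin_pos; apply cond_pos]. }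
  exists (mkposreal _ Hdpos). simpl. intros u v Hu Hv.
  assert (Hu1 : Rabs (u - x) < d1) by (eapply Rlt_le_trans; [exact Hu|apply Rmin_l]).
  assert (Hu2 : Rabs (u - x) < d2) by (eapply Rlt_le_trans; [exact Hu|]; eapply Rle_trans; [apply Rmin_r|apply Rmin_l]).
  assert (Hv1 : Rabs (v - y) < d1) by (eapply Rlt_le_trans; [exact Hv|apply Rmin_l]).
  assert (Hv2 : Rabs (v - y) < d2) by (eapply Rlt_le_trans; [exact Hv|]; eapply Rle_trans; [apply Rmin_r|apply Rmin_l]).
  assert (Hv3 : Rabs (v - y) < d3) by (eapply Rlt_le_trans; [exact Hv|]; eapply Rle_trans; [apply Rmin_r|apply Rmin_r]).
  assert (P1 : Rabs (g u v - g x v - gx * (u - x)) <= eps / 2 * Rabs (u - x)).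
  { destruct (MVT_cor4 (fun z => g z v) (fun z => Derive (fun z' => g z' v) z) x (Rabs (u - x)))
      with (b := u) as [c [Hc1 Hc2]].
    - intros c Hc'. apply Derive_correct. apply Hd1; lra.
    - lra.
    - simpl in Hc1. rewrite Hc1.
      replace (Derive (fun z' => g z' v) c * (u - x) - gx * (u - x))
        with ((Derive (fun z' => g z' v) c - gx) * (u - x)) by ring.
      rewrite Rabs_mult. apply Rmult_le_compat_r; [apply Rabs_pos|].
      left. apply Hd2; lra. }
  assert (P2 : Rabs (g x v - g x y - gy * (v - y)) <= eps / 2 * Rabs (v - y)).
  { destruct (Req_dec v y) as [E|E].
    - rewrite E. replace (g x y - g x y - gy * (y - y)) with 0 by ring. rewrite Rminus_eq_0, Rabs_R0. lra.
    - specialize (Hd3 (v - y)). replace (y + (v - y)) with v in Hd3 by ring.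
      assert (Hne : v - y <> 0) by lra.
      specialize (Hd3 Hne Hv3).
      replace (g x v - g x y - gy * (v - y)) with (((g x v - g x y) / (v - y) - gy) * (v - y)) by (field; exact Hne).
      rewrite Rabs_mult. apply Rmult_le_compat_r; [apply Rabs_pos|]. unfold gy. left; exact Hd3. }
  replace (g u v - g x y - (gx * (u - x) + gy * (v - y))) with
    ((g u v - g x v - gx * (u - x)) + (g x v - g x y - gy * (v - y))) by ring.
  eapply Rle_trans. apply Rabs_triang.
  assert (Rabs (u - x) <= Rmax (Rabs (u - x)) (Rabs (v - y))) by apply Rmax_l.
  assert (Rabs (v - y) <= Rmax (Rabs (u - x)) (Rabs (v - y))) by apply Rmax_r.
  pose proof (cond_pos eps). nra.
Qed.

Lemma lin_zero (b k : R -> R) (s K : R) : 0 < s -> b 0 = 0 ->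
  (forall t, Rabs t < s -> is_derive b t (b t * k t)) ->
  (forall t, Rabs t < s -> k t <= K) ->
  forall t, 0 <= t < s -> b t = 0.
Proof.
  intros Hs Hb0 Hd Hk t [Ht0 Hts].
  set (w := fun z => b z ^ 2 * exp (- (2 * K) * z)).
  assert (Hw : forall z, Rabs z < s -> is_derive w z (2 * (b z)^2 * exp (- (2 * K) * z) * (k z - K))).
  { intros z Hz. unfold w.
    assert (Hz' := Hd z Hz).
    assert (Hex : ex_derive b z) by (eexists; exact Hz').
    pose proof (is_derive_unique b z (b z * k z) Hz') as Hu.
    auto_derive. exact Hex. change (fun x => b x) with b. rewrite Hu. ring. }
  destruct (MVT_gen w 0 t (fun z => 2 * (b z)^2 * exp (- (2 * K) * z) * (k z - K))) as [c [Hc1 Hc2]].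
  - intros z Hz. apply Hw. rewrite Rmin_left, Rmax_right in Hz by lra. rewrite Rabs_pos_eq; lra.
  - intros z Hz. rewrite Rmin_left, Rmax_right in Hz by lra.
    apply continuity_pt_filterlim. apply (ex_derive_continuous w).
    eexists. apply Hw. rewrite Rabs_pos_eq; lra.
  - rewrite Rmin_left, Rmax_right in Hc1 by lra.
    assert (Hcs : Rabs c < s) by (rewrite Rabs_pos_eq; lra).
    assert (Hw0 : w 0 = 0) by (unfold w; rewrite Hb0; ring).
    assert (Hneg : 2 * (b c)^2 * exp (- (2 * K) * c) * (k c - K) <= 0).
    { assert (0 <= (b c)^2) by (apply pow2_ge_0). pose proof (exp_pos (- (2 * K) * c)).
      pose proof (Hk c Hcs). assert (0 <= 2 * (b c)^2 * exp (- (2 * K) * c)) by (apply Rmult_le_pos; [lra|]; lra).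
      nra. }
    assert (Hwt : w t <= 0) by nra.
    unfold w in Hwt. pose proof (exp_pos (- (2 * K) * t)).
    assert (Hsq : b t ^ 2 = 0).
    { assert (0 <= b t ^ 2) by apply pow2_ge_0. nra. }
    simpl in Hsq. rewrite Rmult_1_r in Hsq. apply Rsqr_0_uniq. exact Hsq.
Qed.


Definition clip (r z : R) : R := Rmax (- r) (Rmin r z).

Lemma clip_lip r z w : Rabs (clip r z - clip r w) <= Rabs (z - w).
Proof.
  unfold clip, Rmax, Rmin.
  repeat (destruct Rle_dec); unfold Rabs; repeat (destruct Rcase_abs); lra.
Qed.

Lemma clip_id r z : Rabs z <= r -> clip r z = z.
Proof.
  intros Hz. unfold Rabs in Hz. unfold clip, Rmax, Rmin.
  destruct (Rcase_abs z); repeat (destruct Rle_dec); lra.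
Qed.

Lemma clip_bd r z : 0 <= r -> Rabs (clip r z) <= r.
Proof.
  intros Hr. unfold clip, Rmax, Rmin.
  repeat (destruct Rle_dec); unfold Rabs; repeat (destruct Rcase_abs); lra.
Qed.

Lemma cont_clip (G : R -> R -> R) r x t :
  continuity_2d_pt G (clip r x) (clip r t) ->
  continuity_2d_pt (fun x t => G (clip r x) (clip r t)) x t.
Proof.
  intros Hc eps. destruct (Hc eps) as [d Hd]. exists d. intros u v Hu Hv.
  apply Hd; eapply Rle_lt_trans; try apply clip_lip; assumption.
Qed.

Lemma lip_from_deriv (g dg : R -> R) a b C :
  (forall z, Rmin a b <= z <= Rmax a b -> is_derive g z (dg z)) ->
  (forall z, Rmin a b <= z <= Rmax a b -> Rabs (dg z) <= C) ->
  Rabs (g b - g a) <= C * Rabs (b - a).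
Proof.
  intros Hd Hb.
  destruct (MVT_gen g a b dg) as [c [Hc1 Hc2]].
  - intros z Hz. apply Hd. lra.
  - intros z Hz. apply continuity_pt_filterlim. apply (ex_derive_continuous g).
    eexists. apply Hd. exact Hz.
  - rewrite Hc2, Rabs_mult. apply Rmult_le_compat_r; [apply Rabs_pos|]. apply Hb. exact Hc1.
Qed.

Lemma deriv_b (P Q : R -> R) t dP dQ : is_derive P t dP -> is_derive Q t dQ ->
  is_derive (fun z => 1 - P z ^ 2 - Q z ^ 2) t (-(2 * P t * dP + 2 * Q t * dQ)).
Proof.
  intros HP HQ.
  assert (EP : ex_derive P t) by (eexists; exact HP).
  assert (EQ : ex_derive Q t) by (eexists; exact HQ).
  pose proof (is_derive_unique P t dP HP) as UP.
  pose proof (is_derive_unique Q t dQ HQ) as UQ.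
  auto_derive. split; [exact EP| split; [exact EQ| exact I]].
  change (fun x => P x) with P. change (fun x => Q x) with Q. rewrite UP, UQ. ring.
Qed.

Lemma alg_id (P Q vx vy ux uy ph : R) : Q <> 0 -> ux = vy ->
  (1 - P^2) * uy + 2 * P * Q * vy + (1 - Q^2) * vx - ph * (1 - P^2 - Q^2)^2 = 0 ->
  -(2 * P * (vx * (P / Q) + vy * 1) + 2 * Q * (ux * (P / Q) + uy * 1)) =
  (1 - P^2 - Q^2) * (-(2 / Q) * (ph * (1 - P^2 - Q^2) - (uy + vx))).
Proof.
  intros HQ Hux HA. subst ux.
  assert (E : -(2 * P * (vx * (P / Q) + vy * 1) + 2 * Q * (vy * (P / Q) + uy * 1)) -
    (1 - P^2 - Q^2) * (-(2 / Q) * (ph * (1 - P^2 - Q^2) - (uy + vx)))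
    = -(2 / Q) * ((1 - P^2) * uy + 2 * P * Q * vy + (1 - Q^2) * vx - ph * (1 - P^2 - Q^2)^2)).
  { field. exact HQ. }
  rewrite HA, Rmult_0_r in E. lra.
Qed.

Lemma k_bound Q ph b uy vx Cp Cu Cv : 3/4 < Q -> Rabs ph <= Cp -> Rabs b <= 3 ->
  Rabs uy <= Cu -> Rabs vx <= Cv ->
  -(2 / Q) * (ph * b - (uy + vx)) <= 3 * (3 * Cp + Cu + Cv).
Proof.
  intros HQ Hp Hb Hu Hv.
  set (w := ph * b - (uy + vx)).
  assert (Hw : Rabs w <= 3 * Cp + Cu + Cv).
  { unfold w. eapply Rle_trans. apply Rabs_triang. rewrite Rabs_Ropp.
    eapply Rle_trans. apply Rplus_le_compat_l. apply Rabs_triang.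
    rewrite Rabs_mult. pose proof (Rabs_pos ph). pose proof (Rabs_pos b). nra. }
  assert (H2 : 0 < 2 / Q < 3).
  { split. apply Rdiv_lt_0_compat; lra.
    apply Rmult_lt_reg_r with Q; [lra|]. unfold Rdiv. rewrite Rmult_assoc, Rinv_l by lra. lra. }
  assert (- w <= Rabs w) by (rewrite <- Rabs_Ropp; apply RRle_abs).
  pose proof (Rabs_pos w). nra.
Qed.

Lemma diff_of_C1 (g : R -> R -> R) x y r : 0 < r ->
  (forall x' y', Rabs (x' - x) < r -> Rabs (y' - y) < r -> ex_diff_n g 1 x' y') ->
  differentiable_pt_lim g x y (dx g x y) (dy g x y).
Proof.
  intros Hr Hg. apply diff_partials.
  - exists (mkposreal r Hr). intros u v Hu Hv. destruct (Hg u v Hu Hv) as [_ [Hx _]]. exact Hx.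
  - assert (Hxy : ex_diff_n g 1 x y) by (apply Hg; rewrite Rminus_eq_0, Rabs_R0; exact Hr).
    destruct Hxy as [_ [_ [_ [Hdx _]]]]. exact (proj1 Hdx).
  - assert (Hxy : ex_diff_n g 1 x y) by (apply Hg; rewrite Rminus_eq_0, Rabs_R0; exact Hr).
    destruct Hxy as [_ [_ [Hy _]]]. exact Hy.
Qed.

Lemma bnd_of_close g g0 : Rabs (g - g0) < 1 -> Rabs g <= Rabs g0 + 1.
Proof.
  intros H. replace g with (g0 + (g - g0)) by ring.
  eapply Rle_trans. apply Rabs_triang. lra.
Qed.

Lemma dg_bound vx u v ux Cvx Cux : Rabs (u - 1) < /4 -> Rabs v < /4 ->
  Rabs vx <= Cvx -> Rabs ux <= Cux ->
  Rabs ((vx * u - v * ux) / u ^ 2) <= 4 * (Cvx + Cux).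
Proof.
  intros Hu Hv Hvx Hux.
  apply Rlt_le, Rabs_le_inv in Hu. pose proof (Rabs_pos vx). pose proof (Rabs_pos ux).
  assert (Hu2 : 9/16 <= u ^ 2) by nra.
  unfold Rdiv. rewrite Rabs_mult, Rabs_inv. rewrite (Rabs_pos_eq (u^2)) by lra.
  assert (Hn : Rabs (vx * u - v * ux) <= Cvx * (5/4) + /4 * Cux).
  { eapply Rle_trans. apply Rabs_triang. rewrite Rabs_Ropp, !Rabs_mult.
    rewrite (Rabs_pos_eq u) by lra. pose proof (Rabs_pos v). nra. }
  assert (0 < / u ^ 2 <= 16/9).
  { split. apply Rinv_0_lt_compat; lra.
    replace (16/9) with (/ (9/16)) by field. apply Rinv_le_contravar; lra. }
  pose proof (Rabs_pos (vx * u - v * ux)). nra.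
Qed.

Lemma G_bound v u : Rabs (u - 1) < /4 -> Rabs v < /4 -> Rabs (v / u) <= 1.
Proof.
  intros Hu Hv. apply Rlt_le, Rabs_le_inv in Hu.
  unfold Rdiv. rewrite Rabs_mult, Rabs_inv, (Rabs_pos_eq u) by lra.
  assert (0 < / u <= 4/3).
  { split. apply Rinv_0_lt_compat; lra.
    replace (4/3) with (/ (3/4)) by field. apply Rinv_le_contravar; lra. }
  pose proof (Rabs_pos v). nra.
Qed.

Lemma between_bd c1 c2 z r : Rmin c2 c1 <= z <= Rmax c2 c1 -> Rabs c1 <= r -> Rabs c2 <= r -> Rabs z <= r.
Proof.
  intros Hz H1 H2. apply Rabs_le_inv in H1. apply Rabs_le_inv in H2. apply Rabs_le.
  unfold Rmin, Rmax in Hz. destruct (Rle_dec c2 c1); lra.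
Qed.

Theorem corollary3p4 (f : R -> R -> R) (U : R -> R -> Prop) :
  open2 U -> U 0 0 ->
  Ck_on 3 f U ->
  f 0 0 = 0 -> dx f 0 0 = 0 -> dy f 0 0 = 1 ->
  open_in2 U (fun x y => BF f x y <> 0) ->
  dense_in2 U (fun x y => BF f x y <> 0) ->
  (exists phi : R -> R -> R, Ck_on 1 phi U /\
     forall x y, U x y -> AF f x y - phi x y * (BF f x y)^2 = 0) ->
  forall eps, 0 < eps -> exists x y,
    U x y /\ (x <> 0 \/ y <> 0) /\ Rabs x < eps /\ Rabs y < eps /\ BF f x y = 0.
Proof.
  intros HU U00 Hf f0 fx0 fy0 _ _ [phi [Hphi HA]] eps Heps.
  destruct (HU 0 0 U00) as [e0 [He0 Hbox]].
  assert (Fv : forall x y, U x y -> ex_diff_n (dx f) 2 x y).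
  { intros x y Hxy. apply (ex_diff_n_deriv_aux1 f 2). apply Hf; exact Hxy. }
  assert (Fu : forall x y, U x y -> ex_diff_n (dy f) 2 x y).
  { intros x y Hxy. apply (ex_diff_n_deriv_aux2 f 2). apply Hf; exact Hxy. }
  assert (cu : continuity_2d_pt (dy f) 0 0) by exact (proj1 (Fu 0 0 U00)).
  assert (cv : continuity_2d_pt (dx f) 0 0) by exact (proj1 (Fv 0 0 U00)).
  assert (cvx : continuity_2d_pt (dx (dx f)) 0 0)
    by exact (proj1 (ex_diff_n_deriv_aux1 (dx f) 1 0 0 (Fv 0 0 U00))).
  assert (cux : continuity_2d_pt (dx (dy f)) 0 0)
    by exact (proj1 (ex_diff_n_deriv_aux1 (dy f) 1 0 0 (Fu 0 0 U00))).
  assert (cuy : continuity_2d_pt (dy (dy f)) 0 0)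
    by exact (proj1 (ex_diff_n_deriv_aux2 (dy f) 1 0 0 (Fu 0 0 U00))).
  assert (cph : continuity_2d_pt phi 0 0) by exact (proj1 (Hphi 0 0 U00)).
  set (Cvx := Rabs (dx (dx f) 0 0) + 1).
  set (Cux := Rabs (dx (dy f) 0 0) + 1).
  set (Cuy := Rabs (dy (dy f) 0 0) + 1).
  set (Cph := Rabs (phi 0 0) + 1).
  assert (Hq : 0 < /4) by lra.
  assert (H1 : 0 < 1) by lra.
  assert (Loc : locally_2d (fun x y => U x y /\ Rabs (dy f x y - 1) < /4 /\ Rabs (dx f x y) < /4
     /\ Rabs (dx (dx f) x y) <= Cvx /\ Rabs (dx (dy f) x y) <= Cux
     /\ Rabs (dy (dy f) x y) <= Cuy /\ Rabs (phi x y) <= Cph) 0 0).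
  { repeat apply locally_2d_and.
    - exists (mkposreal e0 He0). intros; apply Hbox; assumption.
    - destruct (cu (mkposreal _ Hq)) as [d Hd]. exists d. intros x y Hx Hy.
      rewrite <- fy0. apply Hd; assumption.
    - destruct (cv (mkposreal _ Hq)) as [d Hd]. exists d. intros x y Hx Hy.
      rewrite <- (Rminus_0_r (dx f x y)), <- fx0. apply Hd; assumption.
    - destruct (cvx (mkposreal _ H1)) as [d Hd]. exists d. intros x y Hx Hy.
      apply bnd_of_close. apply Hd; assumption.
    - destruct (cux (mkposreal _ H1)) as [d Hd]. exists d. intros x y Hx Hy.
      apply bnd_of_close. apply Hd; assumption.
    - destruct (cuy (mkposreal _ H1)) as [d Hd]. exists d. intros x y Hx Hy.
      apply bnd_of_close. apply Hd; assumption.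
    - destruct (cph (mkposreal _ H1)) as [d Hd]. exists d. intros x y Hx Hy.
      apply bnd_of_close. apply Hd; assumption. }
  destruct Loc as [dl Hdl].
  set (d := pos dl).
  assert (Hd : 0 < d) by apply cond_pos.
  assert (Box : forall x y, Rabs x < d -> Rabs y < d ->
     U x y /\ Rabs (dy f x y - 1) < /4 /\ Rabs (dx f x y) < /4
     /\ Rabs (dx (dx f) x y) <= Cvx /\ Rabs (dx (dy f) x y) <= Cux
     /\ Rabs (dy (dy f) x y) <= Cuy /\ Rabs (phi x y) <= Cph).
  { intros x y Hx Hy. apply Hdl; rewrite Rminus_0_r; assumption. }
  set (a := d / 2).
  assert (Ha : 0 < a) by (unfold a; lra).
  assert (Near : forall x y, Rabs x <= a -> Rabs y <= a ->
     forall x' y', Rabs (x' - x) < a -> Rabs (y' - y) < a -> Rabs x' < d /\ Rabs y' < d).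
  { intros x y Hx Hy x' y' Hx' Hy'.
    pose proof (Rabs_triang (x' - x) x). pose proof (Rabs_triang (y' - y) y).
    replace (x' - x + x) with x' in * by ring. replace (y' - y + y) with y' in * by ring.
    unfold a in *. lra. }
  assert (InU : forall x y, Rabs x < d -> Rabs y < d -> U x y).
  { intros x y Hx Hy. exact (proj1 (Box x y Hx Hy)). }
  set (G := fun x t => dx f x t / dy f x t).
  set (H := fun x t => G (clip a x) (clip a t)).
  set (L := 4 * (Cvx + Cux)).
  assert (HCvx : 0 <= Cvx) by (unfold Cvx; pose proof (Rabs_pos (dx (dx f) 0 0)); lra).
  assert (HCux : 0 <= Cux) by (unfold Cux; pose proof (Rabs_pos (dx (dy f) 0 0)); lra).
  assert (HCuy : 0 <= Cuy) by (unfold Cuy; pose proof (Rabs_pos (dy (dy f) 0 0)); lra).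
  assert (HCph : 0 <= Cph) by (unfold Cph; pose proof (Rabs_pos (phi 0 0)); lra).
  assert (HL : 0 <= L) by (unfold L; lra).
  set (s := Rmin a (/ (2 * (L + 1)))).
  assert (Hs : 0 < s).
  { unfold s. apply Rmin_pos; [exact Ha|]. apply Rinv_0_lt_compat; lra. }
  assert (Hsa : s <= a) by apply Rmin_l.
  assert (HLs : L * s <= / 2).
  { apply Rle_trans with (L * / (2 * (L + 1))).
    apply Rmult_le_compat_l; [exact HL| apply Rmin_r].
    assert (E : L * / (2 * (L + 1)) = / 2 - / (2 * (L + 1))) by (field; lra).
    rewrite E. assert (0 < / (2 * (L + 1))) by (apply Rinv_0_lt_compat; lra). lra. }
  assert (HM : 0 <= 1) by lra.
  assert (Hbd : forall x t, Rabs (H x t) <= 1).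
  { intros x t. unfold H, G.
    assert (Hx : Rabs (clip a x) < d) by (pose proof (clip_bd a x (Rlt_le _ _ Ha)); unfold a in *; lra).
    assert (Ht : Rabs (clip a t) < d) by (pose proof (clip_bd a t (Rlt_le _ _ Ha)); unfold a in *; lra).
    destruct (Box _ _ Hx Ht) as [_ [Bu [Bv _]]]. apply G_bound; assumption. }
  assert (Ca : forall z, Rabs (clip a z) < d).
  { intros z. pose proof (clip_bd a z (Rlt_le _ _ Ha)). unfold a in *. lra. }
  assert (Hlip : forall x1 x2 t, Rabs (H x1 t - H x2 t) <= L * Rabs (x1 - x2)).
  { intros x1 x2 t. unfold H.
    apply Rle_trans with (L * Rabs (clip a x1 - clip a x2)); [| apply Rmult_le_compat_l; [exact HL| apply clip_lip]].
    apply (lip_from_deriv (fun z => G z (clip a t))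
       (fun z => (dx (dx f) z (clip a t) * dy f z (clip a t) - dx f z (clip a t) * dx (dy f) z (clip a t)) / (dy f z (clip a t))^2)
       (clip a x2) (clip a x1) L).
    - intros z Hz.
      assert (Hzd : Rabs z < d).
      { assert (Rabs z <= a) by (eapply between_bd; [exact Hz| apply clip_bd; lra| apply clip_bd; lra]).
        unfold a in *; lra. }
      pose proof (Box z (clip a t) Hzd (Ca t)) as [BU [Bu _]].
      unfold G. apply (is_derive_div (fun w => dx f w (clip a t)) (fun w => dy f w (clip a t))).
      + apply Derive_correct. exact (proj1 (proj2 (Fv z (clip a t) BU))).
      + apply Derive_correct. exact (proj1 (proj2 (Fu z (clip a t) BU))).
      + apply Rlt_le, Rabs_le_inv in Bu. lra.
    - intros z Hz.
      assert (Hzd : Rabs z < d).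
      { assert (Rabs z <= a) by (eapply between_bd; [exact Hz| apply clip_bd; lra| apply clip_bd; lra]).
        unfold a in *; lra. }
      pose proof (Box z (clip a t) Hzd (Ca t)) as [BU [Bu [Bv [Bvx [Bux _]]]]].
      apply dg_bound; assumption. }
  assert (Hcont : forall x t, continuity_2d_pt H x t).
  { intros x t. unfold H. apply (cont_clip G a x t).
    pose proof (Box _ _ (Ca x) (Ca t)) as [BU [Bu _]].
    unfold G. apply (continuity_2d_pt_mult (dx f) (fun x y => / dy f x y)).
    exact (proj1 (Fv _ _ BU)).
    apply continuity_2d_pt_inv. exact (proj1 (Fu _ _ BU)).
    apply Rlt_le, Rabs_le_inv in Bu. lra. }
  set (X := Xlim H).
  assert (HX0 : X 0 = 0) by exact (Xlim_0 H 1 L s HM HL Hs HLs Hbd Hlip Hcont).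
  assert (HXb : forall t, Rabs t <= s -> Rabs (X t) <= Rabs t).
  { intros t Ht. pose proof (Xlim_lip H 1 L s HM HL Hs HLs Hbd Hlip Hcont t 0 Ht) as E.
    fold X in E. rewrite HX0, !Rminus_0_r, Rmult_1_l in E. apply E. rewrite Rabs_R0; lra. }
  assert (HXd : forall t, Rabs t < s -> is_derive X t (G (X t) t)).
  { intros t Ht. pose proof (Xlim_deriv H 1 L s HM HL Hs HLs Hbd Hlip Hcont t Ht) as E.
    fold X in E. unfold H in E. rewrite (clip_id a t), (clip_id a (X t)) in E; [exact E| |].
    pose proof (HXb t (Rlt_le _ _ Ht)). lra. lra. }
  assert (Pt : forall t, Rabs t < s -> Rabs (X t) < d /\ Rabs t < d /\ Rabs (X t) <= a /\ Rabs t <= a).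
  { intros t Ht. pose proof (HXb t (Rlt_le _ _ Ht)). unfold a in *. lra. }
  assert (HvC1 : forall x y, Rabs x <= a -> Rabs y <= a ->
    differentiable_pt_lim (dx f) x y (dx (dx f) x y) (dy (dx f) x y)).
  { intros x y Hx Hy. apply (diff_of_C1 (dx f) x y a Ha). intros x' y' Hx' Hy'.
    destruct (Near x y Hx Hy x' y' Hx' Hy') as [A1 A2].
    apply (ex_diff_n_m 2 1); [lia|]. apply Fv. apply InU; assumption. }
  assert (HuC1 : forall x y, Rabs x <= a -> Rabs y <= a ->
    differentiable_pt_lim (dy f) x y (dx (dy f) x y) (dy (dy f) x y)).
  { intros x y Hx Hy. apply (diff_of_C1 (dy f) x y a Ha). intros x' y' Hx' Hy'.
    destruct (Near x y Hx Hy x' y' Hx' Hy') as [A1 A2].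
    apply (ex_diff_n_m 2 1); [lia|]. apply Fu. apply InU; assumption. }
  assert (Schw : forall x y, Rabs x <= a -> Rabs y <= a -> dx (dy f) x y = dy (dx f) x y).
  { intros x y Hx Hy.
    assert (Hxy : U x y) by (apply InU; unfold a in *; lra).
    unfold dx, dy. apply Schwarz.
    - exists (mkposreal a Ha). intros x' y' Hx' Hy'.
      destruct (Near x y Hx Hy x' y' Hx' Hy') as [A1 A2].
      pose proof (InU _ _ A1 A2) as HU'.
      pose proof (Hf x' y' HU') as F3. pose proof (Fv x' y' HU') as F2v. pose proof (Fu x' y' HU') as F2u.
      split; [exact (proj1 (proj2 F3))|].
      split; [exact (proj1 (proj2 (proj2 F3)))|].
      split; [exact (proj1 (proj2 F2u))|].
      exact (proj1 (proj2 (proj2 F2v))).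
    - exact (proj1 (ex_diff_n_deriv_aux1 (dy f) 1 x y (Fu x y Hxy))).
    - exact (proj1 (ex_diff_n_deriv_aux2 (dx f) 1 x y (Fv x y Hxy))). }
  set (b := fun t => BF f (X t) t).
  set (k := fun t => -(2 / dy f (X t) t) * (phi (X t) t * b t - (dy (dy f) (X t) t + dx (dx f) (X t) t))).
  assert (Hbder : forall t, Rabs t < s -> is_derive b t (b t * k t)).
  { intros t Ht. destruct (Pt t Ht) as [Hxd [Htd [Hxa Hta]]].
    destruct (Box _ _ Hxd Htd) as [BU [Bu [Bv _]]].
    assert (dX := HXd t Ht). apply is_derive_Reals in dX.
    assert (dP : is_derive (fun z => dx f (X z) z) t
        (dx (dx f) (X t) t * G (X t) t + dy (dx f) (X t) t * 1)).
    { apply is_derive_Reals. apply (derivable_pt_lim_comp_2d (dx f) X (fun z => z)).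
      apply HvC1; assumption. exact dX. apply derivable_pt_lim_id. }
    assert (dQ : is_derive (fun z => dy f (X z) z) t
        (dx (dy f) (X t) t * G (X t) t + dy (dy f) (X t) t * 1)).
    { apply is_derive_Reals. apply (derivable_pt_lim_comp_2d (dy f) X (fun z => z)).
      apply HuC1; assumption. exact dX. apply derivable_pt_lim_id. }
    pose proof (deriv_b _ _ t _ _ dP dQ) as Db.
    replace (b t * k t) with
      (-(2 * dx f (X t) t * (dx (dx f) (X t) t * G (X t) t + dy (dx f) (X t) t * 1) +
         2 * dy f (X t) t * (dx (dy f) (X t) t * G (X t) t + dy (dy f) (X t) t * 1))).
    exact Db.
    unfold k, b, BF, G. apply alg_id.
    - apply Rlt_le, Rabs_le_inv in Bu. lra.
    - apply Schw; assumption.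
    - pose proof (HA _ _ BU) as HA'. unfold AF, BF in HA'. exact HA'. }
  set (K := 3 * (3 * Cph + Cuy + Cvx)).
  assert (Hk : forall t, Rabs t < s -> k t <= K).
  { intros t Ht. destruct (Pt t Ht) as [Hxd [Htd [Hxa Hta]]].
    destruct (Box _ _ Hxd Htd) as [BU [Bu [Bv [Bvx [Bux [Buy Bph]]]]]].
    unfold k, K. apply k_bound; try assumption.
    - apply Rabs_def2 in Bu; lra.
    - unfold b, BF. apply Rabs_le. apply Rlt_le, Rabs_le_inv in Bu. apply Rlt_le, Rabs_le_inv in Bv. nra. }
  assert (Hb0 : b 0 = 0) by (unfold b, BF; rewrite HX0, fx0, fy0; ring).
  pose proof (lin_zero b k s K Hs Hb0 Hbder Hk) as Z.
  set (t0 := Rmin (s/2) (eps/2)).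
  assert (Ht0 : 0 < t0) by (apply Rmin_pos; lra).
  assert (Ht0s : t0 <= s/2) by apply Rmin_l.
  assert (Ht0e : t0 <= eps/2) by apply Rmin_r.
  assert (Hat0 : Rabs t0 < s) by (rewrite Rabs_pos_eq; lra).
  exists (X t0), t0. destruct (Pt t0 Hat0) as [Hxd [Htd _]].
  split; [apply InU; assumption|].
  split; [right; lra|].
  split. { pose proof (HXb t0 (Rlt_le _ _ Hat0)) as E. rewrite (Rabs_pos_eq t0) in E by lra. lra. }
  split. { rewrite Rabs_pos_eq; lra. }
  apply (Z t0). lra.
Qed.
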